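(* Let $I,J\subseteq\mathbb{R}$ be finite nonempty subsets and let $a=(a_i: i\in I)$ and $b=(b_j: j\in J)$ be two sequences of non-negative real numbers. For each $t\in I+J$, let $u_t(a,b)=\max\{a_i+b_{t-i}: i\in I,\ t-i\in J\}$. Then $$\frac{1}{|I|+|J|-1}\sum_{t\in I+J}u_t(a,b)\ \ge\ \frac{1}{|I|}\sum_{i\in I}a_i+\frac{1}{|J|}\sum_{j\in J}b_j.$$ Moreover, if $\min(|I|,|J|)\ge 2$ and $a_i>0$, $b_j>0$ for all $i\in I$, $j\in J$, then equality holds if and only if $I$ and $J$ are arithmetic progressions with a common difference and the sequences $a$ and $b$ (indexed in increasing order of $I$ and $J$) are arithmetic progressions with a common difference.
   Context: $I+J=\{i+j: i\in I, j\in J\}$. *)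

(* Defs.v *)
From HB Require Import structures.
From mathcomp Require Import all_boot all_order all_algebra.
From mathcomp Require Import finmap.
Set Implicit Arguments. Unset Strict Implicit. Unset Printing Implicit Defensive.
Import Order.TTheory GRing.Theory Num.Theory.
Local Open Scope fset_scope.
Local Open Scope ring_scope.

Definition sumset (R : realFieldType) (I J : {fset R}) : {fset R} :=
  [fset i + j | i in I, j in J].

(* u_t(a,b) = max { a_i + b_(t-i) : i in I, t - i in J }.
   The max is taken with default 0; since a, b are non-negative and the
   index set is non-empty for t in I+J, this is the genuine maximum. *)
Definition u_t (R : realFieldType) (I J : {fset R}) (a b : R -> R) (t : R) : R :=
  \big[Num.max/0]_(i <- I | (t - i) \in J) (a i + b (t - i)).

Definition ap_set (R : realFieldType) (x0 d : R) (n : nat) : {fset R} :=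
  [fset x0 + k%:R * d | k in iota 0 n].

(* Main.v *)
Require Import Defs.
From HB Require Import structures.
From mathcomp Require Import all_boot all_order all_algebra.
From mathcomp Require Import finmap.
From mathcomp Require Import ring lra zify.
Import Order.TTheory GRing.Theory Num.Theory.
Local Open Scope fset_scope.
Local Open Scope ring_scope.

Section S.
Variable R : realFieldType.
Implicit Types (I J : {fset R}) (a b : R -> R).

Lemma u_ge0 I J a b t : 0 <= u_t I J a b t.
Proof.
rewrite /u_t; apply: (big_rec (fun x => 0 <= x)) => // i x _ hx.
by rewrite le_max hx orbT.
Qed.

Lemma u_le I J a b t U : 0 <= U ->
  (forall i, i \in I -> (t - i) \in J -> a i + b (t - i) <= U) -> u_t I J a b t <= U.
Proof.
move=> U0 H; rewrite /u_t big_seq_cond.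
apply: (big_rec (fun x => x <= U)) => // i x /andP[iI tJ] hx.
by rewrite ge_max hx H.
Qed.

Lemma bigmax_ge (r : seq R) (P : pred R) (F : R -> R) j :
  j \in r -> P j -> F j <= \big[Num.max/0]_(i <- r | P i) F i.
Proof.
elim: r => // x r IH; rewrite inE big_cons => /orP[/eqP->|jr] Pj.
  by rewrite Pj le_max lexx.
case: (P x); last exact: IH.
by rewrite le_max IH ?orbT.
Qed.

Lemma u_ge I J a b t i : i \in I -> (t - i) \in J -> a i + b (t - i) <= u_t I J a b t.
Proof. by move=> iI tJ; rewrite /u_t; exact: (@bigmax_ge _ (fun i => (t - i) \in J) (fun i => a i + b (t - i))). Qed.

Lemma u_sym I J a b t : u_t I J a b t = u_t J I b a t.
Proof.
apply/le_anti/andP; split; apply: u_le; rewrite ?u_ge0 // => i iI tJ.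
  have := @u_ge J I b a t (t - i) tJ; rewrite opprB addrC subrK addrC; exact.
have := @u_ge I J a b t (t - i) tJ; rewrite opprB addrC subrK addrC; exact.
Qed.

Lemma sumsetP I J t : reflect (exists2 i, i \in I & exists2 j, j \in J & t = i + j) (t \in sumset I J).
Proof.
apply: (iffP (imfset2P _ _ _ _ _)) => [[i iI [j jJ ->]]|[i iI [j jJ ->]]]; by exists i => //; exists j.
Qed.

Lemma sumset_sym I J : sumset I J = sumset J I.
Proof.
apply/fsetP => t; apply/sumsetP/sumsetP => -[i iI [j jJ ->]]; exists j => //; exists i => //; by rewrite addrC.
Qed.

Definition Gf I J a b := \sum_(t <- sumset I J) u_t I J a b t.

Lemma Gf_sym I J a b : Gf I J a b = Gf J I b a.
Proof. rewrite /Gf sumset_sym; apply: eq_bigr => t _; exact: u_sym. Qed.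


Lemma sum_split (S T : {fset R}) (f : R -> R) : S `<=` T ->
  \sum_(t <- T) f t = \sum_(t <- S) f t + \sum_(t <- T `\` S) f t.
Proof.
move=> /fsubsetP ST; rewrite (big_fsetID _ (mem S)); congr (_ + _); apply: eq_fbigl => x;
  rewrite !inE /=; last by rewrite andbC.
by apply/andP/idP => [[]//|xS]; split => //; apply: ST.
Qed.

Arguments sum_split [S T] f.

Lemma sum_ge0 (T : {fset R}) (f : R -> R) : (forall t, 0 <= f t) -> 0 <= \sum_(t <- T) f t.
Proof. by move=> H; apply: sumr_ge0. Qed.

Lemma sum_ge1 (T : {fset R}) (f : R -> R) t : (forall t, 0 <= f t) -> t \in T ->
  f t <= \sum_(t <- T) f t.
Proof. by move=> H tT; rewrite (big_fsetD1 t) //= lerDl sum_ge0. Qed.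

Lemma sum_ge2 (T : {fset R}) (f : R -> R) t1 t2 : (forall t, 0 <= f t) -> t1 \in T ->
  t2 \in T -> t1 != t2 -> f t1 + f t2 <= \sum_(t <- T) f t.
Proof.
move=> H t1T t2T ne; rewrite (big_fsetD1 t1) //= lerD2l; apply: sum_ge1 => //.
by rewrite !inE eq_sym ne.
Qed.

Arguments sum_ge1 [T f t].
Arguments sum_ge2 [T f t1 t2].

Lemma u_monoI I I' J a b t : I' `<=` I -> u_t I' J a b t <= u_t I J a b t.
Proof.
move=> /fsubsetP sub; apply: u_le; first exact: u_ge0.
by move=> i iI tJ; apply: u_ge => //; apply: sub.
Qed.

Lemma Gf_ge0 I J a b : 0 <= Gf I J a b.
Proof. by apply: sum_ge0 => t; apply: u_ge0. Qed.

Lemma sumset_sub I I' J : I' `<=` I -> sumset I' J `<=` sumset I J.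
Proof.
move=> /fsubsetP sub; apply/fsubsetP => t /sumsetP [i iI [j jJ ->]].
by apply/sumsetP; exists i; [apply: sub|exists j].
Qed.

Lemma rec_main I J a b x1 y1 y : x1 \in I -> y1 \in J -> y \in J ->
  (forall x, x \in I -> x1 <= x) -> (forall z, z \in J -> y1 <= z) ->
  Gf (I `\ x1) J a b + (a x1 + b y1) +
    (if (y != y1) && (x1 + y \notin sumset (I `\ x1) J) then a x1 + b y else 0)
  <= Gf I J a b.
Proof.
move=> x1I y1J yJ minI minJ.
have sub : I `\ x1 `<=` I by apply: fsubsetDl.
rewrite /Gf (sum_split _ (sumset_sub _ _ J sub)) -addrA; apply: lerD.
  by apply: ler_sum => t _; apply: u_monoI.
have h1 : x1 + y1 \in sumset I J `\` sumset (I `\ x1) J.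
  rewrite inE; apply/andP; split; last by apply/sumsetP; exists x1 => //; exists y1.
  apply/negP => /sumsetP [x]; rewrite in_fsetD1 => /andP [xx1 xI] [z zJ] e.
  have lt : x1 < x by rewrite lt_neqAle eq_sym xx1 minI.
  have : x1 + y1 < x + z by apply: ltr_leD => //; apply: minJ.
  by rewrite -e ltxx.
have hu : forall y', y' \in J -> a x1 + b y' <= u_t I J a b (x1 + y').
  by move=> y' y'J; have := @u_ge I J a b (x1 + y') x1 x1I; rewrite addrC addKr; apply.
case: ifP => [/andP [ne nin]|_].
  have h2 : x1 + y \in sumset I J `\` sumset (I `\ x1) J.
    by rewrite inE nin; apply/sumsetP; exists x1 => //; exists y.
  apply: le_trans (sum_ge2 _ h1 h2 _); last 2 first.
  - by move=> t; apply: u_ge0.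
  - by rewrite (can_eq (addKr x1)) eq_sym.
  by apply: lerD; apply: hu.
rewrite addr0; apply: le_trans (sum_ge1 _ h1); [exact: hu|by move=> t; apply: u_ge0].
Qed.

Set Implicit Arguments. Unset Strict Implicit.

Lemma seq_min (s : seq R) z : z \in s -> exists2 x, x \in s & forall y, y \in s -> x <= y.
Proof.
elim: s z => // x s IH z _.
case: (boolP (has (fun w => w < x) s)) => [/hasP [w ws _]|/hasPn hn].
  have [m ms hm] := IH _ ws; exists (Num.min x m).
    by rewrite /Num.min; case: ifP; rewrite inE ?eqxx ?ms ?orbT.
  move=> y; rewrite inE => /orP [/eqP ->|ys]; rewrite ge_min ?lexx //.
  by rewrite hm ?orbT.
exists x; first by rewrite inE eqxx.
by move=> y; rewrite inE => /orP [/eqP ->//|/hn]; rewrite -leNgt.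
Qed.

Lemma fset_min (I : {fset R}) : I != fset0 -> exists2 x, x \in I & forall y, y \in I -> x <= y.
Proof. by move=> /fset0Pn [z zI]; exact: (@seq_min (enum_fset I) z zI). Qed.

Lemma key (p q : nat) (a1 b1 SA SB : R) : (p = 0%N -> SA = 0) -> (q = 0%N -> SB = 0) ->
 p%:R * (((p + q.+1 - 1)%N)%:R * (SA / p%:R + (b1 + SB) / (q.+1)%:R))
 + q%:R * (((p.+1 + q - 1)%N)%:R * ((a1 + SA) / (p.+1)%:R + SB / q%:R))
 = (p + q)%:R * (((p.+1 + q.+1 - 1)%N)%:R * ((a1 + SA)/(p.+1)%:R + (b1+SB)/(q.+1)%:R) - a1 - b1).
Proof.
move=> hp hq.
have -> : (p + q.+1 - 1 = p + q)%N by lia.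
have -> : (p.+1 + q - 1 = p + q)%N by lia.
have -> : (p.+1 + q.+1 - 1 = (p + q).+1)%N by lia.
rewrite -!natr1 !natrD.
case: p hp => [|p] hp; case: q hq => [|q] hq.
- rewrite hp // hq //; ring.
- have hQ : 0 < q.+1%:R :> R by apply: ltr0Sn.
  move: (q.+1%:R) hQ => Q hQ; rewrite hp // mul0r add0r; field; lra.
- have hP : 0 < p.+1%:R :> R by apply: ltr0Sn.
  move: (p.+1%:R) hP => P hP; rewrite hq // mul0r addr0; field; lra.
- have hQ : 0 < q.+1%:R :> R by apply: ltr0Sn.
  have hP : 0 < p.+1%:R :> R by apply: ltr0Sn.
  move: (q.+1%:R) hQ => Q hQ; move: (p.+1%:R) hP => P hP; field; lra.
Qed.


Definition Nf I J a b := ((#|`I| + #|`J| - 1)%N)%:R *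
  ((\sum_(i <- I) a i) / (#|`I|)%:R + (\sum_(j <- J) b j) / (#|`J|)%:R).

Lemma Nf_sym I J a b : Nf I J a b = Nf J I b a.
Proof. by rewrite /Nf addnC addrC. Qed.

Lemma rec1 I J a b x1 y1 : x1 \in I -> y1 \in J ->
  (forall x, x \in I -> x1 <= x) -> (forall z, z \in J -> y1 <= z) ->
  Gf (I `\ x1) J a b + (a x1 + b y1) <= Gf I J a b.
Proof.
move=> x1I y1J mI mJ; have := @rec_main I J a b x1 y1 y1 x1I y1J y1J mI mJ.
by rewrite eqxx /= addr0.
Qed.

Lemma rec2 I J a b x1 y1 : x1 \in I -> y1 \in J ->
  (forall x, x \in I -> x1 <= x) -> (forall z, z \in J -> y1 <= z) ->
  Gf I (J `\ y1) a b + (a x1 + b y1) <= Gf I J a b.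
Proof.
move=> x1I y1J mI mJ; have := rec1 b a y1J x1I mJ mI.
by rewrite -[Gf (J `\ y1) I b a]Gf_sym -[Gf J I b a]Gf_sym [b _ + _]addrC.
Qed.

Lemma sum_D1 I (f : R -> R) x : x \in I -> \sum_(i <- I) f i = f x + \sum_(i <- I `\ x) f i.
Proof. by move=> xI; rewrite (big_fsetD1 x). Qed.

Lemma card_D1 I x : x \in I -> #|` I| = (#|` I `\ x|).+1.
Proof. by move=> xI; rewrite (cardfsD1 x) xI. Qed.

Lemma sum0_card I (f : R -> R) : #|` I| = 0%N -> \sum_(i <- I) f i = 0.
Proof. by move=> /cardfs0_eq ->; rewrite big_seq_fset0. Qed.

Lemma ineq_aux k : forall I J a b, (#|`I| + #|`J| <= k)%N -> I != fset0 -> J != fset0 ->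
  Nf I J a b <= Gf I J a b.
Proof.
elim: k => [|k IH] I J a b hk hI hJ.
  by move: hk; rewrite -cardfs_gt0 in hI; lia.
have [x1 x1I mI] := fset_min hI; have [y1 y1J mJ] := fset_min hJ.
have h1 := rec1 a b x1I y1J mI mJ; have h2 := rec2 a b x1I y1J mI mJ.
have cI := card_D1 x1I; have cJ := card_D1 y1J.
set p := #|` I `\ x1| in cI; set q := #|` J `\ y1| in cJ.
have hp : p%:R * Nf (I `\ x1) J a b <= p%:R * (Gf I J a b - a x1 - b y1).
  case: (posnP p) => [->|pp]; first by rewrite !mul0r.
  rewrite ler_wpM2l // -addrA -opprD lerBrDr; apply: le_trans h1; rewrite lerD2r.
  apply: IH => //; last by rewrite -cardfs_gt0.
  by move: hk; rewrite cI; lia.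
have hq : q%:R * Nf I (J `\ y1) a b <= q%:R * (Gf I J a b - a x1 - b y1).
  case: (posnP q) => [->|pp]; first by rewrite !mul0r.
  rewrite ler_wpM2l // -addrA -opprD lerBrDr; apply: le_trans h2; rewrite lerD2r.
  apply: IH => //; last by rewrite -cardfs_gt0.
  by move: hk; rewrite cJ; lia.
have hkey : p%:R * Nf (I `\ x1) J a b + q%:R * Nf I (J `\ y1) a b =
   (p + q)%:R * (Nf I J a b - a x1 - b y1).
  rewrite /Nf -/p -/q cI cJ (sum_D1 a x1I) (sum_D1 b y1J); apply: key.
    by move=> p0; apply: sum0_card.
  by move=> q0; apply: sum0_card.
case: (posnP (p + q)) => [pq0|pq].
  have p0 : p = 0%N by lia.
  have q0 : q = 0%N by lia.
  rewrite /Nf cI cJ p0 q0 (sum_D1 a x1I) (sum_D1 b y1J) !sum0_card -/p -/q ?p0 ?q0 //.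
  have := Gf_ge0 (I `\ x1) J a b.
  rewrite !addr0 /= !divr1 mul1r; lra.
have : (p + q)%:R * (Nf I J a b - a x1 - b y1) <= (p + q)%:R * (Gf I J a b - a x1 - b y1).
  by rewrite -hkey natrD mulrDl; apply: lerD.
rewrite ler_pM2l ?ltr0n //; lra.
Qed.
Lemma ap_inj (x0 d : R) (k l : nat) : 0 < d -> x0 + k%:R * d = x0 + l%:R * d -> k = l.
Proof.
move=> d0 /addrI /(mulIf (lt0r_neq0 d0)) /eqP; rewrite eqr_nat => /eqP //.
Qed.

Lemma apP (x0 d t : R) n : reflect (exists2 k, (k < n)%N & t = x0 + k%:R * d) (t \in ap_set x0 d n).
Proof.
apply: (iffP (imfsetP _ _ _ _)) => [[k]|[k kn ->]].
  by rewrite /= mem_iota add0n => kn ->; exists k.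
by exists k => //=; rewrite mem_iota.
Qed.

Lemma sum_ap (x0 d : R) n (f : R -> R) : 0 < d ->
  \sum_(t <- ap_set x0 d n) f t = \sum_(k < n) f (x0 + k%:R * d).
Proof.
move=> d0; rewrite /ap_set big_imfset /=; last by move=> k l _ _; apply: ap_inj.
rewrite undup_id ?iota_uniq //; rewrite -(big_mkord (fun _ => true) (fun k => f (x0 + k%:R * d))).
by rewrite /index_iota subn0.
Qed.

Lemma ap_mem (x0 d : R) n k : (k < n)%N -> x0 + k%:R * d \in ap_set x0 d n.
Proof. by move=> kn; apply/apP; exists k. Qed.

Lemma ap_mem0 (x0 d : R) n : (0 < n)%N -> x0 \in ap_set x0 d n.
Proof. by move=> n0; have := ap_mem x0 d n0; rewrite mul0r addr0. Qed.

Lemma ap_min (x0 d z : R) n : 0 < d -> (0 < n)%N -> z \in ap_set x0 d n ->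
  (forall w, w \in ap_set x0 d n -> z <= w) -> z = x0.
Proof.
move=> d0 n0 /apP [k _ ->] h; apply/le_anti/andP; split.
  by have := h _ (ap_mem0 x0 d n0).
by rewrite lerDl mulr_ge0 // ltW.
Qed.

Lemma ap_second (x0 d w : R) n : 0 < d -> (1 < n)%N -> w \in ap_set x0 d n -> w != x0 ->
  (forall v, v \in ap_set x0 d n -> v != x0 -> w <= v) -> w = x0 + d.
Proof.
move=> d0 n1 /apP [k _ ->] ne h; apply/le_anti/andP; split.
  have := h (x0 + 1%:R * d); rewrite mul1r; apply; first by have := ap_mem x0 d n1; rewrite mul1r.
  by rewrite -subr_eq0 addrC addKr gt_eqF.
case: k ne h => [|k] ne h; first by rewrite mul0r addr0 eqxx in ne.
rewrite lerD2l -natr1 mulrDl mul1r lerDr mulr_ge0 // ltW //.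
Qed.

Lemma ap_cons (x0 d t : R) n : (t \in ap_set x0 d n.+1) = (t == x0) || (t \in ap_set (x0 + d) d n).
Proof.
apply/apP/orP => [[[|k] kn ->]|[/eqP ->|/apP [k kn ->]]].
- by left; rewrite mul0r addr0.
- by right; apply/apP; exists k => //; rewrite -natr1; ring.
- by exists 0%N => //; rewrite mul0r addr0.
- by exists k.+1 => //; rewrite -natr1; ring.
Qed.

Lemma sum_lin (al de : R) n : \sum_(k < n) (al + k%:R * de) = n%:R * al + (n%:R * (n%:R - 1) / 2) * de.
Proof.
elim: n => [|n IH]; first by rewrite big_ord0; ring.
rewrite big_ord_recr /= IH -natr1; field; lra.
Qed.

Lemma mem_D1 (S : {fset R}) y t : y \in S -> (t \in S) = (t == y) || (t \in S `\ y).
Proof. by move=> yS; rewrite in_fsetD1; case: eqP => // ->. Qed.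

Lemma card1_mem (S : {fset R}) z t : #|` S| = 1%N -> z \in S -> (t \in S) = (t == z).
Proof.
move=> c1 zS; rewrite (mem_D1 t zS); move: c1; rewrite (cardfsD1 z) zS => /eq_add_S /cardfs0_eq ->.
by rewrite inE orbF.
Qed.

Lemma Nf_key I J a b x1 y1 : x1 \in I -> y1 \in J ->
  (#|` I `\ x1|)%:R * Nf (I `\ x1) J a b + (#|` J `\ y1|)%:R * Nf I (J `\ y1) a b =
   (#|` I `\ x1| + #|` J `\ y1|)%:R * (Nf I J a b - a x1 - b y1).
Proof.
move=> x1I y1J.
have cI := card_D1 x1I; have cJ := card_D1 y1J.
rewrite /Nf cI cJ (sum_D1 a x1I) (sum_D1 b y1J); apply: key.
  by move=> p0; apply: sum0_card.
by move=> q0; apply: sum0_card.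
Qed.

Lemma tight I J a b x1 y1 : x1 \in I -> y1 \in J ->
  (forall x, x \in I -> x1 <= x) -> (forall z, z \in J -> y1 <= z) ->
  (0 < #|` I `\ x1|)%N -> (0 < #|` J `\ y1|)%N -> Gf I J a b = Nf I J a b ->
  [/\ Gf (I `\ x1) J a b = Nf (I `\ x1) J a b, Gf I J a b = Gf (I `\ x1) J a b + (a x1 + b y1),
      Gf I (J `\ y1) a b = Nf I (J `\ y1) a b & Gf I J a b = Gf I (J `\ y1) a b + (a x1 + b y1)].
Proof.
move=> x1I y1J mI mJ p0 q0 GN.
have h1 := rec1 a b x1I y1J mI mJ; have h2 := rec2 a b x1I y1J mI mJ.
have n1 : Nf (I `\ x1) J a b <= Gf (I `\ x1) J a b.
  by apply: (@ineq_aux _ _ _ _ _ (leqnn _)); [rewrite -cardfs_gt0|apply/fset0Pn; exists y1].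
have n2 : Nf I (J `\ y1) a b <= Gf I (J `\ y1) a b.
  by apply: (@ineq_aux _ _ _ _ _ (leqnn _)); [apply/fset0Pn; exists x1|rewrite -cardfs_gt0].
have hk := Nf_key a b x1I y1J.
move: hk; rewrite -GN natrD.
move: p0 q0; set p := #|` I `\ x1|; set q := #|` J `\ y1| => p0 q0.
have hP : 0 < p%:R :> R by rewrite ltr0n.
have hQ : 0 < q%:R :> R by rewrite ltr0n.
move: (p%:R) (q%:R) hP hQ => P Q hP hQ hk.
set X := Gf I J a b - a x1 - b y1.
set N1 := Nf (I `\ x1) J a b in n1 hk *; set N2 := Nf I (J `\ y1) a b in n2 hk *.
set G1 := Gf (I `\ x1) J a b in n1 h1 *; set G2 := Gf I (J `\ y1) a b in n2 h2 *.
have e1 : 0 <= P * (X - N1) by apply: mulr_ge0; rewrite /X; lra.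
have e2 : 0 <= Q * (X - N2) by apply: mulr_ge0; rewrite /X; lra.
have e3 : P * (X - N1) + Q * (X - N2) = 0.
  have -> : P*(X-N1) + Q*(X-N2) = (P+Q)*X - (P*N1 + Q*N2) by ring.
  by rewrite hk /X; ring.
have f1 : P * (X - N1) = 0 by lra.
have f2 : Q * (X - N2) = 0 by lra.
move/eqP: f1; rewrite mulf_eq0 (gt_eqF hP) subr_eq0 /= => /eqP f1.
move/eqP: f2; rewrite mulf_eq0 (gt_eqF hQ) subr_eq0 /= => /eqP f2.
rewrite /X in f1 f2; split; lra.
Qed.

Lemma noextra I J a b x1 y1 y : x1 \in I -> y1 \in J -> y \in J ->
  (forall x, x \in I -> x1 <= x) -> (forall z, z \in J -> y1 <= z) -> y != y1 ->
  (forall i, i \in I -> 0 < a i) -> (forall j, j \in J -> 0 < b j) ->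
  Gf I J a b = Gf (I `\ x1) J a b + (a x1 + b y1) -> x1 + y \in sumset (I `\ x1) J.
Proof.
move=> x1I y1J yJ mI mJ ne pa pb e; apply/negPn/negP => nin.
have := @rec_main I J a b x1 y1 y x1I y1J yJ mI mJ; rewrite ne nin /= e.
have := pa _ x1I; have := pb _ yJ; lra.
Qed.

Lemma gap_le I J x1 y1 x2 y2 : x1 \in I -> y1 \in J ->
  (forall x, x \in I -> x1 <= x) -> (forall z, z \in J -> y1 <= z) ->
  x2 \in I `\ x1 -> (forall v, v \in I `\ x1 -> x2 <= v) ->
  y2 \in J `\ y1 -> (forall v, v \in J `\ y1 -> y2 <= v) ->
  x1 + y2 \in sumset (I `\ x1) J -> x2 - x1 <= y2 - y1.
Proof.
move=> x1I y1J mI mJ x2I m2 y2J m2' /sumsetP [x xI [z zJ e]].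
have hx := m2 _ xI.
have x2x1 : x1 < x2.
  move: x2I; rewrite in_fsetD1 => /andP [ne x2I]; rewrite lt_neqAle eq_sym ne mI //.
case: (eqVneq z y1) => [zy|zny].
  subst z; lra.
have : y2 <= z by apply: m2'; rewrite in_fsetD1 zny.
lra.
Qed.

Definition Struct I J a b := exists (d x0 y0 alpha beta delta : R),
      [/\ 0 < d,
          I = ap_set x0 d #|` I|,
          J = ap_set y0 d #|` J|,
          (forall k, (k < #|` I|)%N -> a (x0 + k%:R * d) = alpha + k%:R * delta)
        & (forall k, (k < #|` J|)%N -> b (y0 + k%:R * d) = beta + k%:R * delta)].

Lemma Struct_sym I J a b : Struct J I b a -> Struct I J a b.
Proof.
by case=> d [x0 [y0 [al [be [de [d0 e1 e2 h1 h2]]]]]]; exists d, y0, x0, be, al, de.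
Qed.

Lemma step_info I J a b x1 y1 x2 y2 : x1 \in I -> y1 \in J ->
  (forall x, x \in I -> x1 <= x) -> (forall z, z \in J -> y1 <= z) ->
  x2 \in I `\ x1 -> (forall v, v \in I `\ x1 -> x2 <= v) ->
  y2 \in J `\ y1 -> (forall v, v \in J `\ y1 -> y2 <= v) ->
  (forall i, i \in I -> 0 < a i) -> (forall j, j \in J -> 0 < b j) ->
  Gf I J a b = Nf I J a b ->
  [/\ x2 - x1 = y2 - y1, Nf (I `\ x1) J a b = Nf I (J `\ y1) a b,
      Gf (I `\ x1) J a b = Nf (I `\ x1) J a b & Gf I (J `\ y1) a b = Nf I (J `\ y1) a b].
Proof.
move=> x1I y1J mI mJ x2I m2 y2J m2' pa pb GN.
have p0 : (0 < #|` I `\ x1|)%N by rewrite cardfs_gt0; apply/fset0Pn; exists x2.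
have q0 : (0 < #|` J `\ y1|)%N by rewrite cardfs_gt0; apply/fset0Pn; exists y2.
have [T1 T4 T2 T5] := tight x1I y1J mI mJ p0 q0 GN.
move: (y2J); rewrite in_fsetD1 => /andP [y2ne y2J0].
move: (x2I); rewrite in_fsetD1 => /andP [x2ne x2I0].
have g1 : x2 - x1 <= y2 - y1.
  apply: (gap_le x1I y1J mI mJ x2I m2 y2J m2').
  exact: (noextra x1I y1J y2J0 mI mJ y2ne pa pb T4).
have g2 : y2 - y1 <= x2 - x1.
  apply: (gap_le y1J x1I mJ mI y2J m2' x2I m2).
  apply: (noextra y1J x1I x2I0 mJ mI x2ne pb pa).
  by rewrite -[Gf (J `\ y1) I b a]Gf_sym -[Gf J I b a]Gf_sym [b y1 + _]addrC.
split => //; first lra.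
by rewrite -T1 -T2; move: T4 T5; lra.
Qed.

Lemma solve_b1 (P Q al be de b1 : R) : 0 < P -> 0 < Q ->
  ((P + 1) * al + ((P + 1) * (P + 1 - 1) / 2) * de - al) / P
   + (b1 + (Q * be + (Q * (Q - 1) / 2) * de)) / (Q + 1)
  = ((P + 1) * al + ((P + 1) * (P + 1 - 1) / 2) * de) / (P + 1)
   + (Q * be + (Q * (Q - 1) / 2) * de) / Q -> b1 = be - de.
Proof.
move=> hP hQ.
have e1 : ((P+1)*al + ((P+1)*(P+1-1)/2)*de - al)/P = al + (P+1)/2*de by field; lra.
have e2 : ((P+1)*al + ((P+1)*(P+1-1)/2)*de)/(P+1) = al + P/2*de by field; lra.
have e3 : (Q*be + (Q*(Q-1)/2)*de)/Q = be + (Q-1)/2*de by field; lra.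
rewrite e1 e2 e3 => H.
have H2 : (b1 + (Q*be + (Q*(Q-1)/2)*de))/(Q+1) = be + (Q-2)/2*de by lra.
have H3 : b1 + (Q*be + (Q*(Q-1)/2)*de) = (Q+1)*(be + (Q-2)/2*de).
  by rewrite -H2; field; lra.
have -> : b1 = (Q+1)*(be + (Q-2)/2*de) - (Q*be + (Q*(Q-1)/2)*de) by lra.
field; lra.
Qed.

Lemma sum_D1' I (f : R -> R) x : x \in I -> \sum_(i <- I `\ x) f i = \sum_(i <- I) f i - f x.
Proof. by move=> xI; rewrite (sum_D1 f xI); ring. Qed.

Lemma caseN3 I J a b x1 y1 x2 y2 : x1 \in I -> y1 \in J ->
  (forall x, x \in I -> x1 <= x) -> (forall z, z \in J -> y1 <= z) ->
  x2 \in I `\ x1 -> (forall v, v \in I `\ x1 -> x2 <= v) ->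
  y2 \in J `\ y1 -> (forall v, v \in J `\ y1 -> y2 <= v) ->
  (1 < #|` J `\ y1|)%N -> x2 - x1 = y2 - y1 ->
  Nf (I `\ x1) J a b = Nf I (J `\ y1) a b -> Struct I (J `\ y1) a b -> Struct I J a b.
Proof.
move=> x1I y1J mI mJ x2I m2 y2J m2' q2 gap T3 [d [x0 [y0 [al [be [de [d0 eI eJ ha hb]]]]]]].
have cI := card_D1 x1I; have cJ := card_D1 y1J.
move: (x2I) (y2J); rewrite !in_fsetD1 => /andP [x2ne x2I0] /andP [y2ne y2J0].
have p0 : (0 < #|` I `\ x1|)%N by rewrite cardfs_gt0; apply/fset0Pn; exists x2.
have ex0 : x1 = x0.
  apply: (@ap_min x0 d x1 #|` I| d0); first by rewrite cI.
    by rewrite -eI.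
  by move=> w; rewrite -eI; apply: mI.
subst x0.
have ex2 : x2 = x1 + d.
  apply: (@ap_second x1 d x2 #|` I| d0); first by rewrite cI; lia.
  - by rewrite -eI.
  - by [].
  by move=> v; rewrite -eI => vI vne; apply: m2; rewrite in_fsetD1 vne.
have ey0 : y2 = y0.
  apply: (@ap_min y0 d y2 #|` J `\ y1| d0); first by lia.
    by rewrite -eJ.
  by move=> w; rewrite -eJ; apply: m2'.
subst y0.
have ey2 : y2 = y1 + d by lra.
have eJfull : J = ap_set y1 d #|` J|.
  apply/fsetP => t; rewrite [in RHS]cJ ap_cons (mem_D1 t y1J) -ey2.
  by congr (_ || _); rewrite {1}eJ.
have sA : \sum_(i <- I) a i = \sum_(k < #|` I|) (al + k%:R * de).
  by rewrite {1}eI sum_ap //; apply: eq_bigr => k _; exact: ha (ltn_ord k).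
have sB' : \sum_(j <- J `\ y1) b j = \sum_(k < #|` J `\ y1|) (be + k%:R * de).
  by rewrite {1}eJ sum_ap //; apply: eq_bigr => k _; exact: hb (ltn_ord k).
have a1 : a x1 = al by have := ha 0%N; rewrite mul0r addr0 mul0r addr0; apply; rewrite cI.
have hb1 : b y1 = be - de.
  move: T3; rewrite /Nf (sum_D1' a x1I) (sum_D1 b y1J) sA sB' a1 !sum_lin cI cJ.
  move: p0 q2; set p := #|` I `\ x1|; set q := #|` J `\ y1| => p0 q2.
  have -> : (p + q.+1 - 1 = p + q)%N by lia.
  have -> : (p.+1 + q - 1 = p + q)%N by lia.
  move/(mulfI _); rewrite pnatr_eq0 addn_eq0 negb_and -!lt0n p0 /= => /(_ isT).
  rewrite -[p.+1%:R]natr1 -[q.+1%:R]natr1; apply: solve_b1; rewrite ltr0n //; lia.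
exists d, x1, y1, al, (be - de), de; split => //.
move=> [|k] kn; first by rewrite mul0r addr0 hb1; ring.
have -> : y1 + k.+1%:R * d = y2 + k%:R * d by rewrite ey2 -natr1; ring.
rewrite hb; last by move: kn; rewrite cJ.
rewrite -natr1; ring.
Qed.

Lemma ap0 (x d t : R) : (t \in ap_set x d 0) = false.
Proof. by apply/apP => -[k]. Qed.

Lemma card1_sum I (f : R -> R) x : #|` I| = 1%N -> x \in I -> \sum_(i <- I) f i = f x.
Proof.
move=> c1 xI; rewrite (sum_D1 f xI) sum0_card ?addr0 //.
by move: c1; rewrite (card_D1 xI) => -[].
Qed.

Lemma case22 I J a b x1 y1 x2 y2 : x1 \in I -> y1 \in J ->
  (forall x, x \in I -> x1 <= x) ->
  x2 \in I `\ x1 -> y2 \in J `\ y1 ->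
  #|` I `\ x1| = 1%N -> #|` J `\ y1| = 1%N -> x2 - x1 = y2 - y1 ->
  Nf (I `\ x1) J a b = Nf I (J `\ y1) a b -> Struct I J a b.
Proof.
move=> x1I y1J mI x2I y2J c1 c2 gap T3.
move: (x2I) (y2J); rewrite !in_fsetD1 => /andP [x2ne x2I0] /andP [y2ne y2J0].
have cI := card_D1 x1I; have cJ := card_D1 y1J; rewrite c1 in cI; rewrite c2 in cJ.
have d0 : 0 < x2 - x1 by rewrite subr_gt0 lt_neqAle eq_sym x2ne mI.
set d := x2 - x1 in d0 gap *.
have eI : I = ap_set x1 d #|` I|.
  apply/fsetP => t; rewrite cI ap_cons ap_cons ap0 orbF (mem_D1 t x1I) (card1_mem _ c1 x2I).
  by rewrite /d addrC subrK.
have eJ : J = ap_set y1 d #|` J|.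
  apply/fsetP => t; rewrite cJ ap_cons ap_cons ap0 orbF (mem_D1 t y1J) (card1_mem _ c2 y2J).
  by rewrite gap addrC subrK.
have sA : \sum_(i <- I) a i = a x1 + a x2 by rewrite (sum_D1 a x1I) (card1_sum _ c1 x2I).
have sB : \sum_(j <- J) b j = b y1 + b y2 by rewrite (sum_D1 b y1J) (card1_sum _ c2 y2J).
have hb : b y2 = b y1 + (a x2 - a x1).
  move: T3; rewrite /Nf c1 c2 cI cJ sA sB (card1_sum _ c1 x2I) (card1_sum _ c2 y2J) /=.
  rewrite (_ : (1 + 2 - 1)%N = 2%N) // !divr1; lra.
exists d, x1, y1, (a x1), (b y1), (a x2 - a x1); split => //.
  move=> [|[|k]] kn; first by rewrite mul0r addr0; ring.
    by rewrite mul1r /d addrC subrK; ring.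
  by move: kn; rewrite cI.
move=> [|[|k]] kn; first by rewrite mul0r addr0; ring.
  by rewrite mul1r gap addrC subrK hb; ring.
by move: kn; rewrite cJ.
Qed.

Lemma eq_aux k : forall I J a b, (#|`I| + #|`J| <= k)%N -> (1 < #|`I|)%N -> (1 < #|`J|)%N ->
  (forall i, i \in I -> 0 < a i) -> (forall j, j \in J -> 0 < b j) ->
  Gf I J a b = Nf I J a b -> Struct I J a b.
Proof.
elim: k => [|k IH] I J a b hk hI hJ pa pb GN; first by lia.
have I0 : I != fset0 by rewrite -cardfs_gt0; lia.
have J0 : J != fset0 by rewrite -cardfs_gt0; lia.
have [x1 x1I mI] := fset_min I0; have [y1 y1J mJ] := fset_min J0.
have cI := card_D1 x1I; have cJ := card_D1 y1J.
have I'0 : I `\ x1 != fset0 by rewrite -cardfs_gt0; lia.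
have J'0 : J `\ y1 != fset0 by rewrite -cardfs_gt0; lia.
have [x2 x2I m2] := fset_min I'0; have [y2 y2J m2'] := fset_min J'0.
have [gap T3 T1 T2] := step_info x1I y1J mI mJ x2I m2 y2J m2' pa pb GN.
have pb' : forall j, j \in J `\ y1 -> 0 < b j.
  by move=> j; rewrite in_fsetD1 => /andP [_ jJ]; exact: pb.
have pa' : forall i, i \in I `\ x1 -> 0 < a i.
  by move=> i; rewrite in_fsetD1 => /andP [_ iI]; exact: pa.
case: (ltnP 1 #|` J `\ y1|) => q2.
  apply: (caseN3 x1I y1J mI mJ x2I m2 y2J m2' q2 gap T3).
  by apply: IH => //; lia.
have q1 : #|` J `\ y1| = 1%N by lia.
case: (ltnP 1 #|` I `\ x1|) => p2.
  apply: Struct_sym.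
  apply: (caseN3 y1J x1I mJ mI y2J m2' x2I m2 p2 (esym gap)).
    by rewrite Nf_sym [in RHS]Nf_sym T3.
  apply: IH => //; first lia.
  by rewrite -[Gf J _ b a]Gf_sym -[Nf J _ b a]Nf_sym.
have p1 : #|` I `\ x1| = 1%N by lia.
exact: (case22 x1I y1J mI x2I y2J p1 q1 gap T3).
Qed.

Lemma struct_tight I J a b : I != fset0 -> J != fset0 ->
  (forall i, i \in I -> 0 <= a i) -> (forall j, j \in J -> 0 <= b j) ->
  Struct I J a b -> Gf I J a b = Nf I J a b.
Proof.
move=> I0 J0 pa pb [d [x0 [y0 [al [be [de [d0 eI eJ ha hb]]]]]]].
have m0 : (0 < #|` I|)%N by rewrite cardfs_gt0.
have n0 : (0 < #|` J|)%N by rewrite cardfs_gt0.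
have eS : sumset I J = ap_set (x0 + y0) d (#|` I| + #|` J| - 1).
  apply/fsetP => t; apply/sumsetP/apP.
    move=> [i iI [j jJ ->]]; rewrite eI in iI; rewrite eJ in jJ.
    move/apP: iI => [k kn ->]; move/apP: jJ => [l ln ->].
    exists (k + l)%N; first by lia.
    by rewrite natrD; ring.
  move=> [s sn ->].
  exists (x0 + (minn s (#|` I|).-1)%:R * d); first by rewrite [X in _ \in X]eI; apply: ap_mem; lia.
  exists (y0 + (s - minn s (#|` I|).-1)%:R * d); first by rewrite [X in _ \in X]eJ; apply: ap_mem; lia.
  have e : s%:R = (minn s (#|` I|).-1)%:R + (s - minn s (#|` I|).-1)%:R :> R.
    by rewrite -natrD; congr (_ %:R); lia.
  rewrite e; ring.
have hu : forall s, (s < #|` I| + #|` J| - 1)%N ->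
    u_t I J a b (x0 + y0 + s%:R * d) = al + be + s%:R * de.
  move=> s sn.
  set k := minn s (#|` I|).-1; set l := (s - k)%N.
  have kI : x0 + k%:R * d \in I by rewrite [X in _ \in X]eI; apply: ap_mem; lia.
  have lJ : y0 + l%:R * d \in J by rewrite [X in _ \in X]eJ; apply: ap_mem; lia.
  have ekl : s = (k + l)%N by lia.
  have val : a (x0 + k%:R * d) + b (y0 + l%:R * d) = al + be + s%:R * de.
    rewrite ha ?hb; try lia; rewrite ekl natrD; ring.
  have et : x0 + y0 + s%:R * d - (x0 + k%:R * d) = y0 + l%:R * d.
    by rewrite ekl natrD; ring.
  apply/le_anti/andP; split; last first.
    by rewrite -val; have := @u_ge I J a b (x0 + y0 + s%:R * d) _ kI; rewrite et; apply.
  apply: u_le.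
    by rewrite -val addr_ge0 // ?pa ?pb.
  move=> i; rewrite {1}eI => /apP [k' k'n ->].
  rewrite {1}eJ => /apP [l' l'n el].
  have el' : x0 + y0 + s%:R * d = x0 + y0 + (k' + l')%N%:R * d.
    by rewrite natrD mulrDl -[LHS](subrK (x0 + k'%:R * d)) el; ring.
  have ekl' := ap_inj d0 el'.
  rewrite el ha // hb // ekl' natrD; rewrite le_eqVlt; apply/orP; left; apply/eqP; ring.
have sG : Gf I J a b = \sum_(s < #|` I| + #|` J| - 1) (al + be + s%:R * de).
  by rewrite /Gf eS sum_ap //; apply: eq_bigr => s _; apply: hu.
have sA : \sum_(i <- I) a i = \sum_(k < #|` I|) (al + k%:R * de).
  by rewrite {1}eI sum_ap //; apply: eq_bigr => k _; exact: ha (ltn_ord k).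
have sB : \sum_(j <- J) b j = \sum_(k < #|` J|) (be + k%:R * de).
  by rewrite {1}eJ sum_ap //; apply: eq_bigr => k _; exact: hb (ltn_ord k).
rewrite sG /Nf sA sB !sum_lin.
move: m0 n0; case: #|` I| => [//|m'] _; case: #|` J| => [//|n'] _.
have -> : (m'.+1 + n'.+1 - 1 = (m' + n').+1)%N by lia.
rewrite -!natr1 natrD.
have hm : 0 <= m'%:R :> R by rewrite ler0n.
have hn : 0 <= n'%:R :> R by rewrite ler0n.
move: (m'%:R) (n'%:R) hm hn => M N hm hn.
field; lra.
Qed.

End S.

Unset Implicit Arguments. Set Strict Implicit.

Theorem lemma2p4 (R : realFieldType) (I J : {fset R}) (a b : R -> R) :
  I != fset0 -> J != fset0 ->
  (forall i, i \in I -> 0 <= a i) ->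
  (forall j, j \in J -> 0 <= b j) ->
  ((\sum_(i <- I) a i) / (#|` I|)%:R + (\sum_(j <- J) b j) / (#|` J|)%:R
     <= (\sum_(t <- sumset I J) u_t I J a b t) / ((#|` I| + #|` J| - 1)%N)%:R)
  /\
  ((2 <= minn #|` I| #|` J|)%N ->
   (forall i, i \in I -> 0 < a i) ->
   (forall j, j \in J -> 0 < b j) ->
   ((\sum_(t <- sumset I J) u_t I J a b t) / ((#|` I| + #|` J| - 1)%N)%:R
      = (\sum_(i <- I) a i) / (#|` I|)%:R + (\sum_(j <- J) b j) / (#|` J|)%:R
    <->
    exists (d x0 y0 alpha beta delta : R),
      [/\ 0 < d,
          I = ap_set x0 d #|` I|,
          J = ap_set y0 d #|` J|,
          (forall k, (k < #|` I|)%N -> a (x0 + k%:R * d) = alpha + k%:R * delta)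
        & (forall k, (k < #|` J|)%N -> b (y0 + k%:R * d) = beta + k%:R * delta)])).
Proof.
move=> I0 J0 pa pb.
have m0 : (0 < #|` I|)%N by rewrite cardfs_gt0.
have n0 : (0 < #|` J|)%N by rewrite cardfs_gt0.
have hc : 0 < ((#|` I| + #|` J| - 1)%N)%:R :> R by rewrite ltr0n; lia.
have hG : \sum_(t <- sumset I J) u_t I J a b t = @Gf R I J a b by [].
rewrite hG.
split.
  rewrite ler_pdivlMr // mulrC.
  exact: (@ineq_aux R _ I J a b (leqnn _) I0 J0).
move=> hmin pa' pb'; split.
  move=> H; apply: (@eq_aux R _ I J a b (leqnn _)) => //.
  - by move: hmin; rewrite leq_min => /andP [].
  - by move: hmin; rewrite leq_min => /andP [].
  by rewrite /Nf -H mulrC divfK // gt_eqF.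
move=> HS; have := @struct_tight R I J a b I0 J0 pa pb HS.
by rewrite /Nf => ->; rewrite mulrC mulKf // gt_eqF.
Qed.
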